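(* Let $\{(\mathcal{X},\mathbf{h}_i)\}_{i=1}^\infty$ be a sequence of representable polymatroids on a common ground set $\mathcal{X}$ and $\{c_i\}_{i=1}^\infty$ positive reals such that $\lim_{i\to\infty}c_i\mathbf{h}_i=\mathbf{h}_0$. Let $0\le\epsilon\le\mathbf{h}_0(\mathcal{X})$, and define for all $\mathcal{A}\subseteq\mathcal{X}$ $\mathbf{g}_i(\mathcal{A})=\min\big(c_i\mathbf{h}_i(\mathcal{A}),\ c_i\mathbf{h}_i(\mathcal{X})-\epsilon\big)$ and $\mathbf{g}_0(\mathcal{A})=\min\big(\mathbf{h}_0(\mathcal{A}),\ \mathbf{h}_0(\mathcal{X})-\epsilon\big)$. Then $\lim_{i\to\infty}\mathbf{g}_i=\mathbf{g}_0$ and $\mathbf{g}_0$ is almost representable.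
   Context: A polymatroid $(\mathcal{X},\mathbf{h})$ is a finite ground set $\mathcal{X}=\{X_1,\dots,X_n\}$ with $\mathbf{h}:2^{\mathcal{X}}\to\mathbb{R}_{\ge0}$ satisfying $\mathbf{h}(\emptyset)=0$, monotonicity and submodularity. It is representable if for some finite field $\mathbb{F}_q$ there are subspaces $V_1,\dots,V_n$ of an $\mathbb{F}_q$-vector space with $\mathbf{h}(\{X_i:i\in\alpha\})=\dim\langle V_i:i\in\alpha\rangle$ for all $\alpha\subseteq\{1,\dots,n\}$. Rank functions are viewed as vectors in $\mathbb{R}^{2^{|\mathcal{X}|}}$ (limits are coordinatewise). A function $\mathbf{h}$ is almost representable if $\mathbf{h}=\lim_{i\to\infty}d_i\mathbf{f}_i$ for some representable rank functions $\mathbf{f}_i$ on $\mathcal{X}$ and positive reals $d_i$. *)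

(* Defs.v *)
From HB Require Import structures.
From mathcomp Require Import all_boot all_order all_algebra all_field.
From mathcomp Require Import all_classical all_reals all_analysis.
Set Implicit Arguments. Unset Strict Implicit. Unset Printing Implicit Defensive.
Import Order.TTheory GRing.Theory Num.Theory.
Import numFieldNormedType.Exports.
Local Open Scope classical_set_scope.
Local Open Scope ring_scope.

(* Ground set X = 'I_n; rank functions are maps {set 'I_n} -> R
   (vectors in R^{2^n}, indexed by subsets). *)

(* Representable: there are a finite field F, a finite-dimensional F-vector
   space F^m and subspaces V_1..V_n (each given as the row space of an
   m x m matrix) such that h(A) = dim < V_i : i in A >. *)
Definition representable (R : realType) (n : nat) (h : {set 'I_n} -> R) : Prop :=
  exists (F : finFieldType) (m : nat) (V : 'I_n -> 'M[F]_m),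
    forall A : {set 'I_n}, h A = (\rank (\sum_(i in A) V i)%MS)%:R.

Definition almost_representable (R : realType) (n : nat) (h : {set 'I_n} -> R)
  : Prop :=
  exists (f : nat -> {set 'I_n} -> R) (d : nat -> R),
    (forall i, representable (f i)) /\ (forall i, 0 < d i) /\
    (forall A : {set 'I_n}, (fun i => d i * f i A) @ \oo --> h A).

(* Main.v *)
Require Import Defs.
From HB Require Import structures.
From mathcomp Require Import all_boot all_order all_algebra all_field.
From mathcomp Require Import all_classical all_reals all_analysis.
From mathcomp Require Import zify lra.
Import Order.TTheory GRing.Theory Num.Theory.
Import numFieldNormedType.Exports.
Set Implicit Arguments. Unset Strict Implicit. Unset Printing Implicit Defensive.
Local Open Scope ring_scope.
Definition reprF (F : finFieldType) (n : nat) (rho : {set 'I_n} -> nat) : Prop :=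
  exists m (V : 'I_n -> 'M[F]_(m, m)), forall A : {set 'I_n}, rho A = \rank (\sum_(i in A) V i)%MS.

Lemma block_diag_eqmx (F : fieldType) p q m1 m2 (X : 'M[F]_(p, m1)) (Y : 'M[F]_(q, m2)) :
  (block_mx X 0 0 Y :=: X *m row_mx 1%:M 0 + Y *m row_mx 0 1%:M)%MS.
Proof.
rewrite block_mxEv !mul_mx_row !mulmx1 !mulmx0.
apply: eqmx_sym; exact: addsmxE.
Qed.

Lemma reprF_add (F : finFieldType) n (r1 r2 : {set 'I_n} -> nat) :
  reprF F r1 -> reprF F r2 -> reprF F (fun A => r1 A + r2 A)%N.
Proof.
move=> [m1 [V1 H1]] [m2 [V2 H2]].
exists (m1 + m2)%N, (fun i => block_mx (V1 i) 0 0 (V2 i)) => A.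
rewrite H1 H2 -rank_diag_block_mx.
set L1 := row_mx (1%:M : 'M[F]_(m1, m1)) (0 : 'M[F]_(m1, m2)).
set L2 := row_mx (0 : 'M[F]_(m2, m1)) (1%:M : 'M[F]_(m2, m2)).
rewrite (block_diag_eqmx (\sum_(i in A) V1 i)%MS (\sum_(i in A) V2 i)%MS) -/L1 -/L2.
rewrite (adds_eqmx (sumsmxMr_gen _ _ L1) (sumsmxMr_gen _ _ L2)).
rewrite -big_split /=.
apply/eqmx_rank/eqmxP; apply: eqmx_sums => i _.
apply: eqmx_sym; apply: eqmx_trans (block_diag_eqmx _ _) _.
apply: adds_eqmx; apply: eqmx_sym; exact: genmxE.
Qed.

Lemma reprF_scale (F : finFieldType) n (r : {set 'I_n} -> nat) k :
  reprF F r -> reprF F (fun A => k * r A)%N.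
Proof.
move=> Hr; elim: k => [|k IH].
  exists 0%N, (fun _ => 0) => A; by rewrite mul0n big1 ?mxrank0.
have [m [V HV]] := reprF_add Hr IH; exists m, V => A; by rewrite mulSn HV.
Qed.
Lemma card_submx (F : finFieldType) k m (M : 'M[F]_(k, m)) :
  #|[set v : 'rV[F]_m | (v <= M)%MS]| = (#|F| ^ \rank M)%N.
Proof.
rewrite -[\rank M]mul1n -card_mx -(card_imset _ (row_free_inj (row_base_free M))).
apply: eq_card => v; rewrite inE; apply/idP/imsetP.
- move=> vM; have: (v <= row_base M)%MS by rewrite eq_row_base.
  by case/submxP => x ->; exists x.
- by case=> x _ ->; rewrite -(eq_row_base M) submxMl.
Qed.

Lemma card_bigcup_le (T I : finType) (P : pred I) (G : I -> {set T}) :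
  (#|\bigcup_(i | P i) G i| <= \sum_(i | P i) #|G i|)%N.
Proof.
apply: (big_rec2 (fun (x : {set T}) y => #|x| <= y)%N); first by rewrite cards0.
move=> i x y _ IH; apply: leq_trans (leq_card_setU _ _) _; exact: leq_add.
Qed.

Lemma avoid_subspaces (F : finFieldType) m (U : 'M[F]_(m, m)) (I : finType) (P : pred I)
  (S : I -> 'M[F]_(m, m)) :
  (forall i, P i -> \rank (S i) < \rank U)%N -> (#|I| < #|F|)%N -> (0 < \rank U)%N ->
  exists w : 'rV[F]_m, (w <= U)%MS /\ forall i, P i -> ~~ (w <= S i)%MS.
Proof.
move=> Hlt HI Hr.
set SU := [set v : 'rV[F]_m | (v <= U)%MS].
set B := \bigcup_(i | P i) [set v : 'rV[F]_m | (v <= S i)%MS].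
have Hcard : (#|B| < #|SU|)%N.
  apply: leq_ltn_trans (card_bigcup_le _ _) _.
  rewrite card_submx.
  have q0 : (0 < #|F|)%N by apply: leq_ltn_trans HI.
  apply: (@leq_ltn_trans (#|I| * #|F| ^ (\rank U).-1)%N).
    apply: (@leq_trans (\sum_(i : I) #|F| ^ (\rank U).-1)%N).
      rewrite [X in (_ <= X)%N](bigID P) /=; apply: leq_trans (leq_addr _ _).
      apply: leq_sum => i Pi; rewrite card_submx leq_pexp2l //.
      by rewrite -ltnS prednK // Hlt.
    rewrite sum_nat_const; by [].
  by rewrite -{2}(prednK Hr) expnS ltn_pmul2r ?expn_gt0 ?q0.
have : ~~ (SU \subset B).
  apply/negP => /subset_leq_card; by rewrite leqNgt Hcard.
case/subsetPn => w; rewrite inE => wU wB; exists w; split=> // i Pi.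
apply/negP => wS; move/negP: wB; apply; apply/bigcupP; exists i => //; by rewrite inE.
Qed.
Lemma proj_exists (F : fieldType) m (w : 'rV[F]_m) : w != 0 ->
  exists P : 'M[F]_(m, m), (kermx P :=: w)%MS.
Proof.
move=> wn0.
have [j wj] : exists j, w 0 j != 0.
  case: (pickP (fun j => w 0 j != 0)) => [j Hj | H0]; first by exists j.
  by case/eqP: wn0; apply/rowP => j; rewrite mxE; move/negbFE/eqP: (H0 j).
exists (1%:M - (w 0 j)^-1 *: (delta_mx j 0 *m w)).
have Hu : forall u : 'rV[F]_m,
    u *m (1%:M - (w 0 j)^-1 *: (delta_mx j 0 *m w)) = u - (u 0 j / w 0 j) *: w.
  move=> u; rewrite mulmxBr mulmx1 -scalemxAr mulmxA -colE.
  have -> : col j u = (u 0 j)%:M.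
    by apply/matrixP => a b; rewrite !mxE !ord1 eqxx mulr1n.
  by rewrite mul_scalar_mx scalerA mulrC.
apply/eqmxP/andP; split.
- apply/rV_subP => u; rewrite sub_kermx Hu subr_eq0 => /eqP ->.
  exact: scalemx_sub.
- by rewrite sub_kermx Hu divff // scale1r subrr.
Qed.

Lemma rank_cap_rV (F : fieldType) m k (S : 'M[F]_(k, m)) (w : 'rV[F]_m) : w != 0 ->
  \rank (S :&: w)%MS = (w <= S)%MS.
Proof.
move=> wn0.
case: (boolP (w <= S)%MS) => wS.
  by rewrite (capmx_idPr wS) rank_rV wn0.
have : (\rank (S :&: w)%MS <= \rank w)%N by apply: mxrankS; exact: capmxSr.
rewrite rank_rV wn0 leq_eqVlt ltnS leqn0 => /orP[/eqP H1 | /eqP -> //].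
have := mxrank_leqif_sup (capmxSr S w); rewrite H1 rank_rV wn0 => [[_ /esym]].
by rewrite eqxx sub_capmx (negbTE wS).
Qed.
Lemma reprF_trunc1 (F : finFieldType) n (rho : {set 'I_n} -> nat) :
  reprF F rho -> (#|{set 'I_n}| < #|F|)%N -> (0 < rho [set: 'I_n]%SET)%N ->
  reprF F (fun A => minn (rho A) (rho [set: 'I_n]%SET).-1).
Proof.
move=> [m [V HV]] Hq Hr.
pose S := fun A : {set 'I_n} => (\sum_(i in A) V i)%MS.
pose U := S [set: 'I_n]%SET.
have HS : forall A, (S A <= U)%MS.
  move=> A; apply/sumsmx_subP => i _; apply: (sumsmx_sup i) => //; by rewrite in_setT.
have HrU : (0 < \rank U)%N by rewrite -HV.
have [w [wU wS]] := @avoid_subspaces F m U _ (fun A => \rank (S A) < \rank U)%N S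
   (fun A H => H) Hq HrU.
have wn0 : w != 0.
  apply/negP => /eqP w0; have := wS (@finset.set0 _).
  rewrite /S big_pred0; last by move=> i; rewrite inE.
  by rewrite mxrank0 HrU w0 sub0mx; move/(_ isT).
have [P HP] := proj_exists wn0.
exists m, (fun i => V i *m P) => A.
rewrite -(sumsmxMr (fun i => i \in A) V P) -/(S A) !HV -/(S A) -/(S [set: 'I_n]%SET) -/U.
have := mxrank_mul_ker (S A) P.
rewrite (cap_eqmx (eqmx_refl _) HP) rank_cap_rV //.
have := mxrankS (HS A).
case: (ltnP (\rank (S A)) (\rank U)) => HA.
  by rewrite (negbTE (wS _ HA)) /=; lia.
have HUA : (U <= S A)%MS.
  have [_ <-] := mxrank_leqif_sup (HS A).
  by rewrite eqn_leq HA andbT; apply: mxrankS (HS A).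
rewrite (submx_trans wU HUA) /=; lia.
Qed.

Lemma reprF_trunc (F : finFieldType) n (rho : {set 'I_n} -> nat) t :
  reprF F rho -> (#|{set 'I_n}| < #|F|)%N -> (t <= rho [set: 'I_n]%SET)%N ->
  reprF F (fun A => minn (rho A) (rho [set: 'I_n]%SET - t)).
Proof.
move=> Hr Hq; elim: t => [|t IH] Ht.
  have [m [V HV]] := Hr; exists m, V => A; rewrite subn0 -HV.
  have [m' [V' HV']] := Hr.
  suff : (rho A <= rho [set: 'I_n]%SET)%N by move=> H; apply/minn_idPl.
  rewrite !HV; apply: mxrankS; apply/sumsmx_subP => i _; apply: (sumsmx_sup i) => //; by rewrite in_setT.
have := reprF_trunc1 (IH (ltnW Ht)) Hq.
have -> : minn (rho [set: 'I_n]%SET) (rho [set: 'I_n]%SET - t) = (rho [set: 'I_n]%SET - t)%N by lia.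
move/(_ ltac:(lia)) => [m [V HV]]; exists m, V => A; rewrite -HV; lia.
Qed.
Lemma reprF_map (F L : finFieldType) (f : {rmorphism F -> L}) n (rho : {set 'I_n} -> nat) :
  reprF F rho -> reprF L rho.
Proof.
move=> [m [V HV]]; exists m, (fun i => map_mx f (V i)) => A.
rewrite HV -(mxrank_map f); apply/eqmx_rank.
apply: (big_rec2 (fun x y => (map_mx f x == y)%MS)).
  by rewrite map_mx0; apply/eqmxP.
move=> i x y _ /eqmxP Hxy; apply/eqmxP.
apply: eqmx_trans (map_addsmx _ _ _) _; exact: adds_eqmx.
Qed.

Lemma big_field (F : finFieldType) N :
  exists (L : finFieldType) (f : {rmorphism F -> L}), (N < #|L|)%N.
Proof.
have [p pr_p pcharF] := finPcharP F.
pose m := (p ^ N.+1)%N.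
have m_gt1 : (1 < m)%N by rewrite (ltn_exp2l 0) ?prime_gt1.
have m_gt0 := ltnW m_gt1; have m1_gt0: (0 < m.-1)%N by rewrite -ltnS prednK.
pose q (R : nzRingType) : {poly R} := 'X^m - 'X.
have Dq (R : nzRingType) : q R = ('X^(m.-1) - 1) * ('X - 0).
  by rewrite subr0 mulrBl mul1r -exprSr prednK.
have /FinSplittingFieldFor[/= L splitLq]: q F != 0.
  by rewrite Dq monic_neq0 ?rpredM ?monicXsubC ?monicXnsubC.
rewrite [map_poly _ _]rmorphB rmorphXn /= map_polyX -/(q L) in splitLq.
have pcharL: p \in [pchar L] by rewrite pchar_lalg.
exists (FinFieldExtType L), (in_alg L).
have{splitLq} [zs DqL defL] := splitLq.
have Uzs: uniq zs.
  rewrite -separable_prod_XsubC -(eqp_separable DqL) Dq separable_root andbC.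
  rewrite /root !hornerE subr_eq0 eq_sym expr0n gtn_eqF ?oner_eq0 //=.
  rewrite cyclotomic.separable_Xn_sub_1 // -subn1 natrB // subr_eq0.
  by rewrite natrX pcharf0 // expr0n gtn_eqF // eq_sym oner_eq0.
have Hsz : size zs = m.
  apply: succn_inj; rewrite -(size_prod_XsubC _ id).
  by rewrite -(eqp_size DqL) size_polyDl size_polyXn // size_polyN size_polyX.
have HN : (N < m)%N.
  by apply: ltnW; apply: ltn_expl; exact: prime_gt1.
have U' : @uniq (FinFieldExtType L) zs := Uzs.
apply: leq_trans HN _; rewrite -Hsz -(card_uniqP U'); exact: max_card.
Qed.
Lemma reprF_mono (F : finFieldType) n (rho : {set 'I_n} -> nat) :
  reprF F rho -> forall A, (rho A <= rho [set: 'I_n]%SET)%N.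
Proof.
move=> [m [V HV]] A; rewrite !HV; apply: mxrankS.
apply/sumsmx_subP => i _; apply: (sumsmx_sup i) => //; by rewrite in_setT.
Qed.
Local Open Scope classical_set_scope.
Unset Implicit Arguments.
Section Analytic.
Variable R : realType.

Lemma min_lip (x y a b : R) :
  `|Num.min x y - Num.min a b| <= `|x - a| + `|y - b|.
Proof.
have h1 := ler_norm (x - a); have h2 := ler_norm (y - b).
have h3 : a - x <= `|x - a| by rewrite distrC ler_norm.
have h4 : b - y <= `|y - b| by rewrite distrC ler_norm.
rewrite ler_norml; case: (leP x y) => Hxy; case: (leP a b) => Hab;
  rewrite ?(minEle) ?Hxy ?Hab /=; apply/andP; split; try lra.
Qed.

Lemma max_lip (x y a b : R) :
  `|Num.max x y - Num.max a b| <= `|x - a| + `|y - b|.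
Proof.
have h1 := ler_norm (x - a); have h2 := ler_norm (y - b).
have h3 : a - x <= `|x - a| by rewrite distrC ler_norm.
have h4 : b - y <= `|y - b| by rewrite distrC ler_norm.
rewrite ler_norml; case: (leP x y) => Hxy; case: (leP a b) => Hab;
  rewrite ?(maxEle) ?Hxy ?Hab /=; apply/andP; split; try lra.
Qed.

Lemma cvg_bound (u v : nat -> R) (l : R) :
  (forall n, `|u n - l| <= v n) -> v @ \oo --> 0 -> u @ \oo --> l.
Proof.
move=> Huv v0; apply/cvgrPdist_le => e e0.
near=> n.
rewrite distrC; apply: le_trans (Huv n) _; apply: le_trans (ler_norm _) _.
near: n; exact: (cvgr0_norm_le _ v0 _ e0).
Unshelve. all: by end_near. Qed.

Lemma cvg_dist0 (u : nat -> R) (l : R) : u @ \oo --> l -> (fun n => `|u n - l|) @ \oo --> 0.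
Proof.
move=> ul; have := cvg_norm (cvgB ul (cvg_cst l)).
rewrite subrr normr0; apply; typeclasses eauto.
Qed.

Lemma cvg_min2 (x y : nat -> R) a b : x @ \oo --> a -> y @ \oo --> b ->
  (fun n => Num.min (x n) (y n)) @ \oo --> Num.min a b.
Proof.
move=> xa yb; apply: (@cvg_bound _ (fun n => `|x n - a| + `|y n - b|)).
  move=> n; exact: min_lip.
by have := cvgD (cvg_dist0 _ _ xa) (cvg_dist0 _ _ yb); rewrite addr0; apply; typeclasses eauto.
Qed.

Lemma cvg_max2 (x y : nat -> R) a b : x @ \oo --> a -> y @ \oo --> b ->
  (fun n => Num.max (x n) (y n)) @ \oo --> Num.max a b.
Proof.
move=> xa yb; apply: (@cvg_bound _ (fun n => `|x n - a| + `|y n - b|)).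
  move=> n; exact: max_lip.
by have := cvgD (cvg_dist0 _ _ xa) (cvg_dist0 _ _ yb); rewrite addr0; apply; typeclasses eauto.
Qed.

Lemma cvg_bound2 (u w v : nat -> R) (l : R) :
  (forall n, `|u n - w n| <= v n) -> v @ \oo --> 0 -> w @ \oo --> l -> u @ \oo --> l.
Proof.
move=> Huv v0 wl; apply: (@cvg_bound _ (fun n => `|w n - l| + v n)).
  move=> n; have h1 := ler_distD (w n) (u n) l; have h2 := Huv n; lra.
by have := cvgD (cvg_dist0 _ _ wl) v0; rewrite addr0; apply; typeclasses eauto.
Qed.

Lemma key_ineq (a b e D T : R) : 0 <= a -> a <= b -> 0 < D -> D * T <= e -> D * T <= b ->
  (D * T = b \/ e < D * T + D) ->
  `|Num.min a (b - D * T) - Num.max (Num.min a (b - e)) 0| <= D.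
Proof.
move=> a0 ab D0 Te Tb HT.
have [m [Hm1 Hm2 Hm3 Hm4]] : exists m, [/\ Num.min a (b - e) = m, m <= a, m <= b - e &
   (m = a \/ m = b - e)].
  exists (Num.min a (b - e)); rewrite minEle; case: leP => H; split => //; try lra; by [left | right].
have [m' [Hn1 Hn2 Hn3 Hn4]] : exists m, [/\ Num.min a (b - D * T) = m, m <= a, m <= b - D * T &
   (m = a \/ m = b - D * T)].
  exists (Num.min a (b - D * T)); rewrite minEle; case: leP => H; split => //; try lra; by [left | right].
rewrite Hm1 Hn1.
rewrite maxEle; case: (leP m 0) => H0;
rewrite ler_norml; apply/andP; split; case: HT => HT; case: Hm4 => Hm4; case: Hn4 => Hn4; lra.
Qed.

End Analytic.
Lemma natr_minn (R : realType) (D : R) (x y : nat) : 0 < D ->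
  D * (minn x y)%:R = Num.min (D * x%:R) (D * y%:R).
Proof.
move=> D0; rewrite minEle ler_pM2l // ler_nat.
by case: (leqP x y).
Qed.

Unset Implicit Arguments.

Theorem proposition2 (R : realType) (n : nat)
  (h : nat -> {set 'I_n} -> R) (c : nat -> R) (h0 : {set 'I_n} -> R) (eps : R) :
  (forall i, representable (h i)) ->
  (forall i, 0 < c i) ->
  (forall A : {set 'I_n}, (fun i => c i * h i A) @ \oo --> h0 A) ->
  0 <= eps -> eps <= h0 [set: 'I_n]%SET ->
  let g := fun i (A : {set 'I_n}) => Num.min (c i * h i A) (c i * h i [set: 'I_n]%SET - eps) in
  let g0 := fun A : {set 'I_n} => Num.min (h0 A) (h0 [set: 'I_n]%SET - eps) in
  (forall A : {set 'I_n}, (fun i => g i A) @ \oo --> g0 A) /\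
  almost_representable g0.
Proof.
move=> Hrep Hc Hcv He0 HeX g g0.
have Hmin : forall A, (fun i => g i A) @ \oo --> g0 A.
  move=> A; rewrite /g /g0.
  apply: (@cvg_min2 R); first exact: Hcv.
  have := cvgB (Hcv [set: 'I_n]%SET) (cvg_cst eps); apply; typeclasses eauto.
split => //.
pose rho i A := Num.truncn (h i A).
have Hrho : forall i A, h i A = (rho i A)%:R.
  by move=> i A; have [F [m [V HV]]] := Hrep i; rewrite /rho HV natrK.
have HF : forall i, exists F : finFieldType, reprF F (rho i).
  by move=> i; have [F [m [V HV]]] := Hrep i; exists F, m, V => A; rewrite /rho HV natrK.
have Hmono : forall i A, (rho i A <= rho i [set: 'I_n]%SET)%N.
  by move=> i A; have [F HFi] := HF i; exact: reprF_mono HFi A.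
have h0pos : forall A, 0 <= h0 A.
  move=> B.
  have Hn : \forall i \near \oo, [set x : R | 0 <= x] (c i * h i B).
    by apply: nearW => i /=; apply: mulr_ge0; [exact: ltW | rewrite Hrho ler0n].
  have cl : closed [set x : R | 0 <= x] by exact: closed_ge.
  exact: (closed_cvg _ cl Hn _ (Hcv B)).
pose k i := (Num.truncn (i.+1%:R * c i)).+1.
pose d i := c i / (k i)%:R.
have k0 : forall i, 0 < ((k i)%:R : R) by move=> i; rewrite ltr0n.
have d0 : forall i, 0 < d i by move=> i; rewrite divr_gt0.
have dk : forall i, d i * (k i)%:R = c i by move=> i; rewrite divfK // gt_eqF.
pose t i := minn (Num.truncn (eps / d i)) (k i * rho i [set: 'I_n]%SET).
pose f i A := ((minn (k i * rho i A) (k i * rho i [set: 'I_n]%SET - t i))%:R : R).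
exists f, d; split; [|split].
- move=> i; have [F HFi] := HF i.
  have H1 := reprF_scale (k i) HFi.
  have [L [phi HL]] := big_field F #|{set 'I_n}|.
  have H2 := reprF_map phi H1.
  have Ht : (t i <= k i * rho i [set: 'I_n]%SET)%N by exact: geq_minr.
  have [m [V HV]] := reprF_trunc H2 HL Ht.
  by exists L, m, V => A; rewrite /f -HV.
- exact: d0.
- move=> A.
  pose G i := Num.max (Num.min (c i * h i A) (c i * h i [set: 'I_n]%SET - eps)) 0.
  apply: (@cvg_bound2 R _ G d).
  + move=> i.
    have Ht : (t i <= k i * rho i [set: 'I_n]%SET)%N by exact: geq_minr.
    have -> : d i * f i A = Num.min (c i * h i A) (c i * h i [set: 'I_n]%SET - d i * (t i)%:R).
      rewrite /f natr_minn // natrB // mulrBr !natrM !mulrA !dk -!Hrho //.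
    apply: key_ineq.
    * by apply: mulr_ge0; [exact: ltW | rewrite Hrho ler0n].
    * by rewrite ler_pM2l // !Hrho ler_nat.
    * exact: d0.
    * have H1 : ((t i)%:R : R) <= eps / d i.
        apply: le_trans (_ : ((Num.truncn (eps / d i))%:R : R) <= _).
          by rewrite ler_nat geq_minl.
        by rewrite truncn_le divr_ge0 // ltW.
      by have := ler_wpM2l (ltW (d0 i)) H1; rewrite [d i * (eps / d i)]mulrC divfK // gt_eqF.
    * rewrite -dk -mulrA ler_pM2l // Hrho -natrM ler_nat; exact: Ht.
    * case: (leqP (Num.truncn (eps / d i)) (k i * rho i [set: 'I_n]%SET)) => Hc'.
        right; rewrite /t (minn_idPl Hc').
        have : eps / d i < (Num.truncn (eps / d i)).+1%:R by rewrite -truncn_le_nat.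
        by rewrite -(ltr_pM2l (d0 i)) [d i * (eps / d i)]mulrC divfK ?gt_eqF // -addn1 natrD mulrDr mulr1.
      left; rewrite /t (minn_idPr (ltnW Hc')) natrM mulrA dk Hrho //.
  + apply: (@cvg_bound R d harmonic).
      move=> i; rewrite subr0 ger0_norm ?ltW // /harmonic /=.
      rewrite /d ltr_pdivrMr // -(ltr_pM2l (ltr0Sn R i)) mulrA mulfV ?pnatr_eq0 // mul1r.
      by rewrite -truncn_le_nat.
    exact: cvg_harmonic.
  + have g0pos : 0 <= g0 A.
      by rewrite /g0 minEle; case: (leP (h0 A) (h0 [set: 'I_n]%SET - eps)) => _; [exact: h0pos | rewrite subr_ge0].
    have HG := @cvg_max2 R _ _ _ _ (Hmin A) (cvg_cst (0 : R)).
    have E : Num.max (g0 A) 0 = g0 A.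
      by rewrite maxEle; case: leP => // H; apply/eqP; rewrite eq_le H g0pos.
    rewrite E in HG; apply: HG; typeclasses eauto.
Qed.
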